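(* Let $\mathbf{T}$ be a totally ordered set and $\Bbbk$ a field. The assignment $F\mapsto\mathcal{B}_F$, sending a homomorphism $F$ of pointwise finite-dimensional $\mathbf{T}$-persistence modules to the barcode of its image, defines a functor from the category of factorizations $\mathrm{Fact}(\mathbf{vec}^{\mathbf{T}})$ to the poset $\mathbf{SBar}_{\mathbf{T}}$. Equivalently: whenever $F:\mathbb{U}\to\mathbb{V}$ and $G:\mathbb{T}'\to\mathbb{W}$ are homomorphisms of pointwise finite-dimensional $\mathbf{T}$-persistence modules and there exist homomorphisms $\varphi_1:\mathbb{T}'\to\mathbb{U}$ and $\varphi_2:\mathbb{V}\to\mathbb{W}$ with $G=\varphi_2\circ F\circ\varphi_1$, we have $\mathcal{B}_G\sqsubseteq\mathcal{B}_F$.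
   Context: A $\mathbf{T}$-persistence module over a field $\Bbbk$ is a functor $\mathbb{V}:\mathbf{T}\to\mathbf{Vec}_\Bbbk$; homomorphisms are natural transformations; it is pointwise finite-dimensional (p.f.d.) if each $\mathbb{V}(t)$ is finite-dimensional; $\mathbf{vec}^{\mathbf{T}}$ denotes the category of p.f.d. $\mathbf{T}$-modules. An interval in $\mathbf{T}$ is a nonempty convex subset; $\mathcal{I}_{\mathbf{T}}$ is the set of intervals. A $\mathbf{T}$-indexed barcode is a function $\mathcal{B}:\mathrm{Rep}(\mathcal{B})\to\mathcal{I}_{\mathbf{T}}$ from a set of bars. Every p.f.d. $\mathbf{T}$-module $\mathbb{V}$ is isomorphic to $\bigoplus_{\beta\in\mathrm{Rep}(\mathcal{B}_\mathbb{V})}\Bbbk_{\mathcal{B}_\mathbb{V}(\beta)}$ for a barcode $\mathcal{B}_\mathbb{V}$, unique up to bijection of bars, where $\Bbbk_I$ is the interval module ($\Bbbk$ on $I$, $0$ elsewhere, identity maps within $I$). For a homomorphism $F$, $\mathcal{B}_F:=\mathcal{B}_{\mathrm{im}\,F}$. A matching $M\subseteq\mathrm{Rep}(\mathcal{A})\times\mathrm{Rep}(\mathcal{B})$ relates each element to at most one other element; it is injective if every $\alpha\in\mathrm{Rep}(\mathcal{A})$ is matched. It is a sub-barcode matching if $\mathcal{A}(\alpha)\subseteq\mathcal{B}(\beta)$ for all $(\alpha,\beta)\in M$. We write $\mathcal{A}\sqsubseteq\mathcal{B}$ ($\mathcal{A}$ is a sub-barcode of $\mathcal{B}$) if there is an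 injective sub-barcode matching from $\mathcal{A}$ to $\mathcal{B}$. $\mathbf{SBar}_{\mathbf{T}}$ is the poset of isomorphism classes of $\mathbf{T}$-indexed barcodes ordered by $\sqsubseteq$. The category of factorizations $\mathrm{Fact}(\mathbf{C})$ has as objects the morphisms of $\mathbf{C}$, and an arrow $G\rightleftharpoons F$ from $G:a\to d$ to $F:b\to c$ is a pair $(\varphi_1:a\to b,\varphi_2:c\to d)$ with $G=\varphi_2\circ F\circ\varphi_1$. *)

(* Defs.v *)
From HB Require Import structures.
From mathcomp Require Import all_boot all_order all_algebra.
Set Implicit Arguments. Unset Strict Implicit. Unset Printing Implicit Defensive.
Import Order.TTheory GRing.Theory.
Local Open Scope order_scope.

Section PersistenceDefs.
Variables (K : fieldType) (d : Order.disp_t) (T : orderType d).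

(* Each V t is a finite-dimensional K-vector space (vectType K); the structure
   maps pmap s t are only meaningful (and constrained) for s <= t. *)
Record pmod := PMod {
  pV :> T -> vectType K;
  pmap : forall s t : T, 'Hom(pV s, pV t);
  pmap_id : forall (t : T) (x : pV t), pmap t t x = x;
  pmap_comp : forall (r s t : T) (x : pV r), r <= s -> s <= t ->
      pmap r t x = pmap s t (pmap r s x)
}.

Record pmhom (V W : pmod) := PMHom {
  hcomp :> forall t : T, 'Hom(V t, W t);
  hnat : forall (s t : T) (x : V s), s <= t ->
      hcomp t (pmap V s t x) = pmap W s t (hcomp s x)
}.

Definition is_interval (I : pred T) : Prop :=
  (exists t, I t) /\ (forall r s t : T, r <= s -> s <= t -> I r -> I t -> I s).

Record barcode := Barcode {
  rep : Type;
  bar : rep -> pred T;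
  bar_interval : forall b, is_interval (bar b)
}.

Definition matching (A B : barcode) (M : rep A -> rep B -> Prop) : Prop :=
  (forall a b b', M a b -> M a b' -> b = b') /\
  (forall a a' b, M a b -> M a' b -> a = a').

Definition subbarcode (A B : barcode) : Prop :=
  exists M : rep A -> rep B -> Prop,
    [/\ matching M,
        (forall a, exists b, M a b) &
        (forall a b, M a b -> forall t, bar a t -> bar b t)].

(* B is a barcode of im F, i.e. im F is isomorphic to the direct sum of the
   interval modules k_{B(beta)}.  Written out: v beta t is the image of the
   generator of the beta-th summand at index t (t in B beta) under such an
   isomorphism; at each t the vectors v beta t with t in B beta are finitely
   many and form a basis of im F(t) = limg (F t), and the structure maps of
   W (restricted to im F) act on them as the interval modules' maps do. *)
Definition barcode_of_image (V W : pmod) (F : pmhom V W) (B : barcode) : Prop :=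
  exists v : rep B -> forall t : T, W t,
    (forall t : T, exists n (e : 'I_n -> rep B),
        [/\ injective e,
            (forall i, bar (e i) t),
            (forall b, bar b t -> exists i, e i = b) &
            basis_of (limg (F t)) [seq v (e i) t | i <- enum 'I_n]]) /\
    (forall (b : rep B) (s t : T), s <= t -> bar b s ->
        pmap W s t (v b s) = if bar b t then v b t else 0%R).

End PersistenceDefs.

(* Main.v *)
Require Import Defs.
From HB Require Import structures.
From mathcomp Require Import all_boot all_order all_algebra.
From mathcomp Require Import boolp.
From mathcomp Require Import zify.
From mathcomp Require finmap classical_sets cardinality topology.
Import Order.TTheory GRing.Theory.
Unset Printing Implicit Defensive.

Set Implicit Arguments. Unset Strict Implicit.
Section ChainMatch.
Variables (A B : finType) (cA : A -> nat) (cB : B -> nat) (kA : A -> nat) (kB : B -> nat).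

Definition cntA (SA : {set A}) c k := [set a in SA | (cA a == c) && (kA a <= k)].
Definition cntB (SB : {set B}) c k := [set b in SB | (cB b == c) && (kB b <= k)].

Lemma chain_match n : forall (SA : {set A}) (SB : {set B}), #|SA| <= n ->
  (forall c k, #|cntA SA c k| <= #|cntB SB c k|) ->
  exists h : A -> option B,
   (forall a, a \in SA -> exists b, [/\ h a = Some b, b \in SB, cB b = cA a & kB b <= kA a]) /\
   (forall a a' b, a \in SA -> a' \in SA -> h a = Some b -> h a' = Some b -> a = a').
Proof.
elim: n => [|n IH] SA SB.
  rewrite leqn0 cards_eq0 => /eqP -> _; exists (fun=> None); split=> a; by rewrite inE.
move=> szA Hc.
have [SA0|[a0 a0A]] := set_0Vmem SA.
  exists (fun=> None); split=> a; by rewrite SA0 inE.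
pose am := [arg max_(a > a0 in SA) kA a].
have amA : am \in SA by rewrite /am; case: arg_maxnP.
have amM : forall a, a \in SA -> kA a <= kA am by rewrite /am; case: arg_maxnP.
pose c0 := cA am; pose k0 := kA am.
have : 0 < #|cntB SB c0 k0|.
  apply: leq_trans (Hc c0 k0); apply/card_gt0P; exists am.
  by rewrite inE amA /= eqxx leqnn.
case/card_gt0P => b1 b1B.
pose bm := [arg max_(b > b1 in cntB SB c0 k0) kB b].
have bmB : bm \in cntB SB c0 k0 by rewrite /bm; case: arg_maxnP.
have bmM : forall b, b \in cntB SB c0 k0 -> kB b <= kB bm by rewrite /bm; case: arg_maxnP.
move: (bmB); rewrite inE => /andP [bmSB /andP [/eqP bmc bmk]].
have szA' : #|SA :\ am| <= n.
  by move: szA; rewrite (cardsD1 am SA) amA add1n ltnS.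
have HcA : forall c k, #|cntA (SA :\ am) c k| <= #|cntB (SB :\ bm) c k|.
  move=> c k.
  have EA : cntA (SA :\ am) c k = cntA SA c k :\ am.
    by apply/setP => x; rewrite !inE; case: (x == am).
  have EB : cntB (SB :\ bm) c k = cntB SB c k :\ bm.
    by apply/setP => x; rewrite !inE; case: (x == bm).
  rewrite EA EB.
  have := Hc c k; rewrite (cardsD1 am (cntA SA c k)) (cardsD1 bm (cntB SB c k)).
  case Ha: (am \in cntA SA c k); case Hb: (bm \in cntB SB c k) => /=.
  - by rewrite !add1n ltnS.
  - exfalso; move: Ha; rewrite inE amA /= => /andP [/eqP ac ak].
    move: Hb; rewrite inE bmSB /= bmc -ac eqxx /=.
    by rewrite (leq_trans bmk ak).
  2: by rewrite !add0n.
  - rewrite add0n add1n => _.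
    have Hbt := Hb; move: Hb; rewrite inE bmSB bmc /= => /andP [/eqP cc bk].
    have Ha' : am \notin cntA SA c k by rewrite Ha.
    have kk : k < k0.
      move: Ha'; rewrite inE amA /= -/c0 cc eqxx /= -ltnNge; done.
    have EB2 : cntB SB c k = cntB SB c0 k0.
      apply/setP => x; rewrite !inE -cc.
      apply/idP/idP => /andP [xS /andP [xc xk]]; rewrite xS xc /=.
        by rewrite (leq_trans xk) // ltnW.
      apply: leq_trans (bmM x _) bk; by rewrite inE xS xc xk.
    have HA2 : am \in cntA SA c0 k0 by rewrite inE amA /= eqxx leqnn.
    have sub : cntA SA c k \subset cntA SA c0 k0 :\ am.
      apply/subsetP => x; rewrite !inE -cc => /andP [xS /andP [xc xk]].
      rewrite xS xc /= (leq_trans xk (ltnW kk)) andbT.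
      apply/eqP => xam; move: Ha'; rewrite -xam inE xS /= -cc xc xk //.
    have := Hc c0 k0; rewrite (cardsD1 am (cntA SA c0 k0)) HA2 -EB2 add1n.
    rewrite (cardsD1 bm (cntB SB c k)) Hbt add1n ltnS => H.
    apply: leq_trans H; apply: subset_leq_card.
    by apply: subset_trans sub; apply: subsetDl.
have [h [h1 h2]] := IH _ _ szA' HcA.
exists (fun a => if a == am then Some bm else h a); split.
  move=> a aA; case: eqP => [->|/eqP ne].
    by exists bm; split.
  have [b [hb bS bc bk]] := h1 a (ltac:(by rewrite !inE ne aA)).
  exists b; split=> //; by move: bS; rewrite inE => /andP [].
move=> a a' b aA a'A.
case: eqP => [->|/eqP ne]; case: eqP => [->|/eqP ne'] //.
- move=> [<-] hb; have [b' [hb' bS _ _]] := h1 a' (ltac:(by rewrite !inE ne' a'A)).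
  by move: bS; rewrite hb in hb'; case: hb' => <-; rewrite !inE; case/andP => /eqP.
- move=> hb [eb]; have [b' [hb' bS _ _]] := h1 a (ltac:(by rewrite !inE ne aA)).
  by move: bS; rewrite hb in hb'; case: hb' => <-; rewrite eb !inE; case/andP => /eqP.
- by apply: h2; rewrite !inE ?ne ?ne'.
Qed.
End ChainMatch.

Lemma card_ltord M m : m <= M -> #|[set k : 'I_M | k < m]| = m.
Proof.
move=> mM.
have -> : [set k : 'I_M | k < m] = [set widen_ord mM i | i in 'I_m].
  apply/setP => k; rewrite !inE; apply/idP/imsetP => [km|[i _ ->]] /=.
    by exists (Ordinal km) => //; apply: val_inj.
  exact: ltn_ord.
rewrite card_imset ?card_ord //; move=> i j /(congr1 val) /= e; exact: val_inj.
Qed.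

Lemma card_split (T : finType) (P Q : pred T) :
  #|[set x | P x]| = #|[set x | P x && Q x]| + #|[set x | P x && ~~ Q x]|.
Proof.
rewrite -(cardsID [set x | Q x] [set x | P x]); congr (_ + _); apply: eq_card => x;
  by rewrite !inE andbC.
Qed.

Lemma eq_set_card (T : finType) (P Q : pred T) :
  (forall x, P x = Q x) -> #|[set x | P x]| = #|[set x | Q x]|.
Proof. by move=> H; apply: eq_card => x; rewrite !inE H. Qed.

Lemma set0_card (T : finType) (P : pred T) :
  (forall x, ~~ P x) -> #|[set x | P x]| = 0.
Proof. by move=> H; apply/eqP; rewrite cards_eq0; apply/eqP/setP => x; rewrite !inE (negbTE (H x)). Qed.

Section Virtual.
Variables (n : nat) (RZ : nat -> nat -> nat).
Hypothesis RZ0 : forall j, RZ 0 j = 0.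
Hypothesis RZn : forall i, RZ i n = 0.
Hypothesis P1 : forall i j, i <= j < n -> RZ i j + RZ i.+1 j.+1 <= RZ i.+1 j + RZ i j.+1.

Definition mZ i j := (RZ i.+1 j + RZ i j.+1) - (RZ i j + RZ i.+1 j.+1).
Definition MZ := \sum_(i < n) \sum_(j < n) mZ i j.
Definition Zt := ('I_n * 'I_n * 'I_MZ)%type.
Definition SZ := [set z : Zt | (z.1.1 <= z.1.2) && (z.2 < mZ z.1.1 z.1.2)].
Definition sZ (z : Zt) : nat := z.1.1.
Definition eZ (z : Zt) : nat := z.1.2.

Lemma mZ_le c j (cn : c < n) (jn : j < n) : mZ c j <= MZ.
Proof.
rewrite /MZ (bigD1 (Ordinal cn)) //= (bigD1 (Ordinal jn)) //= -addnA; exact: leq_addr.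
Qed.

Lemma cardZ_cj c j : c <= j < n ->
  #|[set z | (z \in SZ) && ((sZ z == c) && (eZ z == j))]| = mZ c j.
Proof.
case/andP => cj jn; have cn : c < n by apply: leq_ltn_trans jn.
have -> : [set z | (z \in SZ) && ((sZ z == c) && (eZ z == j))] =
   [set (Ordinal cn, Ordinal jn, k) | k in [set k : 'I_MZ | k < mZ c j]].
  apply/setP => -[[c' j'] k]; rewrite !inE /sZ /eZ /=.
  apply/idP/imsetP => [/andP [/andP [_ km] /andP [/eqP ec /eqP ej]]|[k' + [-> -> ->]]].
    exists k; first by rewrite inE -ec -ej.
    by congr (_, _, _); apply: val_inj.
  by rewrite inE /= cj eqxx eqxx => ->.
rewrite card_imset; first by apply: card_ltord; apply: mZ_le.
by move=> k1 k2 [].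
Qed.

Lemma cnt_s c : c < n -> forall k, k <= n - c ->
  #|[set z | (z \in SZ) && ((sZ z == c) && (n - k <= eZ z))]| + RZ c (n - k) = RZ c.+1 (n - k).
Proof.
move=> cn; elim=> [|k IH] kc.
  rewrite subn0 !RZn addn0; apply: set0_card => z.
  by apply/negP => /andP [_ /andP [_]]; rewrite /eZ leqNgt ltn_ord.
rewrite (card_split _ (fun z => eZ z == n - k.+1)).
have -> : #|[set x | (x \in SZ) && ((sZ x == c) && (n - k.+1 <= eZ x)) && (eZ x == n - k.+1)]|
   = mZ c (n - k.+1).
  rewrite -cardZ_cj; last by apply/andP; split; lia.
  apply: eq_set_card => z; case: (z \in SZ) => //=.
  by case: (sZ z == c); case: (eZ z =P _) => [->|_]; rewrite ?leqnn ?andbT ?andbF.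
have -> : #|[set x | (x \in SZ) && ((sZ x == c) && (n - k.+1 <= eZ x)) && (eZ x != n - k.+1)]|
   = #|[set z | (z \in SZ) && ((sZ z == c) && (n - k <= eZ z))]|.
  apply: eq_set_card => z; case: (z \in SZ) => //=.
  case: (sZ z == c) => //=; rewrite /eZ; have := ltn_ord z.1.2; lia.
have h1 : c <= n - k.+1 < n by apply/andP; split; lia.
have := IH (ltnW kc); have := P1 h1.
rewrite /mZ; have -> : (n - k.+1).+1 = n - k by lia.
move: #|_| => X; lia.
Qed.

Lemma cnt_e c : c < n -> forall i, i <= c.+1 ->
  #|[set z | (z \in SZ) && ((eZ z == c) && (sZ z < i))]| + RZ i c.+1 = RZ i c.
Proof.
move=> cn; elim=> [|i IH] ic.
  rewrite !RZ0 addn0; apply: set0_card => z; by rewrite ltn0 !andbF.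
rewrite (card_split _ (fun z => sZ z == i)).
have -> : #|[set x | (x \in SZ) && ((eZ x == c) && (sZ x < i.+1)) && (sZ x == i)]|
   = mZ i c.
  rewrite -cardZ_cj; last by apply/andP; split; lia.
  apply: eq_set_card => z; case: (z \in SZ) => //=.
  by case: (eZ z == c); case: (sZ z =P _) => [->|_]; rewrite ?leqnn ?andbT ?andbF.
have -> : #|[set x | (x \in SZ) && ((eZ x == c) && (sZ x < i.+1)) && (sZ x != i)]|
   = #|[set z | (z \in SZ) && ((eZ z == c) && (sZ z < i))]|.
  apply: eq_set_card => z; case: (z \in SZ) => //=.
  case: (eZ z == c) => //=; rewrite /sZ; lia.
have h1 : i <= c < n by apply/andP; split; lia.
have := IH (ltnW ic); have := P1 h1.
rewrite /mZ; move: #|_| => X; lia.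
Qed.

End Virtual.

Section Core.
Variables (n : nat) (A B : finType) (SA : {set A}) (SB : {set B})
  (sA eA : A -> nat) (sB eB : B -> nat).
Hypothesis HA : forall a, a \in SA -> sA a <= eA a < n.
Hypothesis HB : forall b, b \in SB -> sB b <= eB b < n.
Definition RA i j := #|[set a | (a \in SA) && ((sA a < i) && (j <= eA a))]|.
Definition RB i j := #|[set b | (b \in SB) && ((sB b < i) && (j <= eB b))]|.
Variable RZ : nat -> nat -> nat.
Hypothesis RZ0 : forall j, RZ 0 j = 0.
Hypothesis RZn : forall i, RZ i n = 0.
Hypothesis P1 : forall i j, i <= j < n -> RZ i j + RZ i.+1 j.+1 <= RZ i.+1 j + RZ i j.+1.
Hypothesis P2 : forall i j, i <= j < n -> RZ i.+1 j + RB i.+1 j.+1 <= RB i.+1 j + RZ i.+1 j.+1.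
Hypothesis P3 : forall i j, i <= j < n -> RA i.+1 j + RZ i j <= RZ i.+1 j + RA i j.

Lemma stage1 : forall c k,
  #|cntA sA (fun a => n - eA a) SA c k| <=
  #|cntB (sZ (RZ := RZ) (n := n)) (fun z => n - eZ z) (SZ n RZ) c k|.
Proof.
move=> c k; rewrite /cntA /cntB.
have [cn|cn] := ltnP c n; last first.
  rewrite (set0_card (P := fun a => (a \in SA) && ((sA a == c) && (n - eA a <= k)))) //.
  move=> a; apply/negP => /andP [aS /andP [/eqP ac _]]; have := HA aS; lia.
pose j := maxn c (n - k).
have [jn|jn] := ltnP j n; last first.
  rewrite (set0_card (P := fun a => (a \in SA) && ((sA a == c) && (n - eA a <= k)))) //.
  move=> a; apply/negP => /andP [aS /andP [/eqP ac ak]]; have := HA aS; lia.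
have E1 : #|[set a | (a \in SA) && ((sA a == c) && (n - eA a <= k))]| + RA c j = RA c.+1 j.
  rewrite /RA [in RHS](card_split _ (fun a => sA a == c)); congr (_ + _);
  apply: eq_set_card => a; case aS: (a \in SA) => //=; have := HA aS;
  case: (sA a =P c) => [->|]; lia.
have E2 := cnt_s RZn P1 cn (k := n - j) ltac:(lia).
rewrite (_ : n - (n - j) = j) in E2; last by lia.
have -> : #|[set a | (a \in SA) && ((sA a == c) && (n - eA a <= k))]| = RA c.+1 j - RA c j by lia.
have -> : #|[set z | (z \in SZ n RZ) && ((sZ z == c) && (n - eZ z <= k))]| = RZ c.+1 j - RZ c j.
  rewrite -E2; have -> : forall x y, x + y - y = x by move=> x y; lia.
  apply: eq_set_card => z; case zS: (z \in SZ n RZ) => //=.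
  move: zS; rewrite inE => /andP [le _]; have := ltn_ord z.1.2.
  rewrite /sZ /eZ in le *; case: (_ =P c) => [e|]; lia.
have := P3 (i := c) (j := j) ltac:(lia); lia.
Qed.

Lemma stage2 : forall c k,
  #|cntA (eZ (RZ := RZ) (n := n)) (sZ (RZ := RZ) (n := n)) (SZ n RZ) c k| <=
  #|cntB eB sB SB c k|.
Proof.
move=> c k; rewrite /cntA /cntB.
have [cn|cn] := ltnP c n; last first.
  rewrite (set0_card (P := fun z => (z \in SZ n RZ) && ((eZ z == c) && (sZ z <= k)))) //.
  move=> z; apply/negP => /andP [_ /andP [/eqP zc _]].
  have H : eZ z < n := ltn_ord _.
  lia.
pose i := (minn k c).+1.
have E1 : #|[set b | (b \in SB) && ((eB b == c) && (sB b <= k))]| + RB i c.+1 = RB i c.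
  rewrite /RB [in RHS](card_split _ (fun b => eB b == c)); congr (_ + _);
  apply: eq_set_card => b; case bS: (b \in SB) => //=; have := HB bS;
  case: (eB b =P c) => [->|]; lia.
have E2 := cnt_e RZ0 P1 cn (i := i) ltac:(lia).
have -> : #|[set z | (z \in SZ n RZ) && ((eZ z == c) && (sZ z <= k))]| = RZ i c - RZ i c.+1.
  rewrite -E2; have -> : forall x y, x + y - y = x by move=> x y; lia.
  apply: eq_set_card => z; case zS: (z \in SZ n RZ) => //=.
  move: zS; rewrite inE => /andP [le _]; have := ltn_ord z.1.2.
  rewrite /sZ /eZ in le *; case: (_ =P c) => [e|]; lia.
have := P2 (i := minn k c) (j := c) ltac:(lia); rewrite -/i; lia.
Qed.

Theorem core : exists h : A -> option B,
 (forall a, a \in SA -> exists b, [/\ h a = Some b, b \in SB, sB b <= sA a & eA a <= eB b]) /\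
 (forall a a' b, a \in SA -> a' \in SA -> h a = Some b -> h a' = Some b -> a = a').
Proof.
have [h1 [h1a h1b]] := chain_match (leqnn #|SA|) stage1.
have [h2 [h2a h2b]] := chain_match (leqnn #|SZ n RZ|) stage2.
exists (fun a => if h1 a is Some z then h2 z else None); split.
  move=> a aS; have [z [-> zS zc zk]] := h1a a aS.
  have [b [-> bS bc bk]] := h2a z zS; exists b; split=> //.
    by rewrite -zc.
  have H : eZ z < n := ltn_ord _.
  rewrite bc; have := HA aS; lia.
move=> a a' b aS a'S.
have [z [hz zS _ _]] := h1a a aS; have [z' [hz' z'S _ _]] := h1a a' a'S.
rewrite hz hz' => e1 e2; have ez := h2b _ _ _ zS z'S e1 e2; subst z'.
exact: h1b aS a'S hz hz'.
Qed.
End Core.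
Unset Implicit Arguments.
Lemma card_le_rel (X Y : finType) (P : pred X) (Q : pred Y) (R : X -> Y -> Prop) :
  (forall x, P x -> exists y, Q y /\ R x y) ->
  (forall x x' y, P x -> P x' -> R x y -> R x' y -> x = x') ->
  #|[set x | P x]| <= #|[set y | Q y]|.
Proof.
move=> H1 H2; case: (pickP P) => [x0 Px0|P0]; last first.
  have -> : [set x | P x] = set0 by apply/setP => x; rewrite !inE P0.
  by rewrite cards0.
have [y0 _] := H1 x0 Px0.
pose f x := odflt y0 [pick y | Q y && `[< R x y >]].
have fP x : P x -> Q (f x) /\ R x (f x).
  move=> Px; rewrite /f; case: pickP => [y /andP [Qy /asboolP Rxy]|none] //=.
  have [y [Qy Rxy]] := H1 x Px; have := none y; rewrite Qy /=.
  by case: asboolP.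
rewrite -(card_in_imset (f := f) (D := [set x | P x])).
  apply: subset_leq_card; apply/subsetP => y /imsetP [x]; rewrite inE => xP ->.
  by rewrite inE; case: (fP x xP).
move=> x x'; rewrite !inE => xP x'P fe.
have [_ R1] := fP x xP; have [_ R2] := fP x' x'P.
by apply: (H2 x x' (f x)) => //; rewrite fe.
Qed.

Lemma card_bij (X Y : finType) (P : pred X) (Q : pred Y) (R : X -> Y -> Prop) :
  (forall x, P x -> exists y, Q y /\ R x y) ->
  (forall y, Q y -> exists x, P x /\ R x y) ->
  (forall x x' y, P x -> P x' -> R x y -> R x' y -> x = x') ->
  (forall x y y', Q y -> Q y' -> R x y -> R x y' -> y = y') ->
  #|[set x | P x]| = #|[set y | Q y]|.
Proof.
move=> H1 H2 H3 H4; apply/eqP; rewrite eqn_leq; apply/andP; split.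
  exact: (@card_le_rel X Y P Q R H1 H3).
apply: (@card_le_rel Y X Q P (fun y x => R x y)) => //.
by move=> y y' x Qy Qy' Rxy Rxy'; apply: (H4 x).
Qed.

Lemma card_set_count (N : nat) (P : pred 'I_N) : #|[set i | P i]| = count P (enum 'I_N).
Proof. by rewrite cardsE cardE -size_filter {1}/enum_mem -enumT. Qed.

Section Decomp.
Variables (K : fieldType) (d : Order.disp_t) (T : orderType d).
Variables (V W : pmod K T) (F : pmhom V W) (B : barcode T).
Variables (v : rep B -> forall t, W t) (N : T -> nat) (e : forall t, 'I_(N t) -> rep B).
Hypothesis e_inj : forall t, injective (e t).
Hypothesis e_bar : forall t i, bar (e t i) t.
Hypothesis e_surj : forall t b, bar b t -> exists i, e t i = b.
Hypothesis e_basis : forall t, basis_of (limg (F t)) [seq v (e t i) t | i <- enum 'I_(N t)].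
Hypothesis v_map : forall b (s t : T), (s <= t)%O -> bar b s ->
  Defs.pmap W s t (v b s) = if bar b t then v b t else 0%R.

Lemma dim_sub (t : T) (P : pred 'I_(N t)) :
  \dim <<[seq v (e t i) t | i <- enum 'I_(N t) & P i]>> = #|[set i | P i]|.
Proof.
set X := [seq v (e t i) t | i <- enum 'I_(N t)].
set Y := [seq v (e t i) t | i <- enum 'I_(N t) & P i].
have fX : free X := basis_free (e_basis t).
have sYX : subseq Y X by apply: map_subseq; apply: filter_subseq.
have /subseq_uniqP EY := sYX; rewrite (free_uniq fX) in EY.
have fY : free Y by rewrite (EY erefl); apply: filter_free.
move/eqP: fY => ->; rewrite size_map size_filter card_set_count //.
Qed.

Lemma img_span (s t : T) : (s <= t)%O ->
  (Defs.pmap W s t @: limg (F s))%VS =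
  <<[seq v (e t i) t | i <- enum 'I_(N t) & bar (e t i) s]>>%VS.
Proof.
move=> st; rewrite -(span_basis (e_basis s)) limg_span -map_comp.
apply/subv_anti/andP; split.
- apply/span_subvP => x /mapP [i _ ->] /=.
  rewrite v_map // ?e_bar //; case: ifP => bt; last exact: mem0v.
  have [j ej] := e_surj _ _ bt; apply: memv_span; apply/mapP; exists j.
    by rewrite mem_filter mem_enum andbT ej e_bar.
  by rewrite ej.
- apply/span_subvP => x /mapP [j]; rewrite mem_filter => /andP [bs _] ->.
  have [i ei] := e_surj _ _ bs; apply: memv_span; apply/mapP; exists i.
    by rewrite mem_enum.
  by rewrite /= v_map ?e_bar // ei e_bar.
Qed.

Lemma dim_img (s t : T) : (s <= t)%O ->
  \dim (Defs.pmap W s t @: limg (F s)) = #|[set i : 'I_(N t) | bar (e t i) s]|.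
Proof. by move=> st; rewrite img_span // dim_sub. Qed.

Section Chain.
Variables (n : nat) (p : nat -> T).
Hypothesis p_mono : forall i j, i <= j -> j < n -> (p i <= p j)%O.

Definition Asig := {k : 'I_n & 'I_(N (p k))}.
Definition barOf (x : Asig) : rep B := e (p (tag x)) (tagged x).
Definition sX (x : Asig) : nat := tag x.
Definition SA : {set Asig} :=
  [set x : Asig | [forall k : 'I_n, (k < sX x) ==> ~~ bar (barOf x) (p k)]].
Definition eX (x : Asig) : nat := \max_(j : 'I_n | bar (barOf x) (p j)) j.

Lemma convex (b : rep B) i k j : i <= k -> k <= j -> j < n ->
  bar b (p i) -> bar b (p j) -> bar b (p k).
Proof.
move=> ik kj jn bi bj; have [_ cv] := bar_interval b.
apply: (cv (p i) (p k) (p j)) => //; apply: p_mono => //; apply: leq_ltn_trans kj jn.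
Qed.

Lemma sX_bar x : bar (barOf x) (p (sX x)).
Proof. exact: e_bar. Qed.

Lemma eX_bar x : bar (barOf x) (p (eX x)) /\ sX x <= eX x < n.
Proof.
have hp : 0 < #|[pred j : 'I_n | bar (barOf x) (p j)]|.
  by apply/card_gt0P; exists (tag x); rewrite inE; exact: sX_bar.
have [j0 j0in Ej] := eq_bigmax_cond (fun j : 'I_n => nat_of_ord j) hp.
have E : eX x = j0 by exact: Ej.
have le : sX x <= eX x.
  exact: (@leq_bigmax_cond _ (fun j : 'I_n => bar (barOf x) (p j)) (fun j : 'I_n => nat_of_ord j) (tag x) (sX_bar x)).
rewrite le /= E ltn_ord; split=> //; by move: j0in; rewrite inE.
Qed.

Lemma bar_iff x k : x \in SA -> k < n -> bar (barOf x) (p k) = (sX x <= k <= eX x).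
Proof.
move=> xS kn; have [eb /andP [se en]] := eX_bar x.
apply/idP/idP.
- move=> bk; apply/andP; split.
    rewrite leqNgt; apply/negP => ks.
    move: xS; rewrite inE => /forallP /(_ (Ordinal kn)) /implyP /(_ ks).
    by rewrite bk.
  exact: (@leq_bigmax_cond _ (fun j : 'I_n => bar (barOf x) (p j)) (fun j : 'I_n => nat_of_ord j) (Ordinal kn) bk).
- by case/andP => sk ke; apply: (convex _ _ _ _ sk ke en (sX_bar x) eb).
Qed.

Lemma barOf_inj x y : x \in SA -> y \in SA -> barOf x = barOf y -> x = y.
Proof.
move=> xS yS exy.
have [_ /andP [_ exn]] := eX_bar x; have [_ /andP [_ eyn]] := eX_bar y.
have sxn : sX x < n by apply: ltn_ord.
have syn : sX y < n by apply: ltn_ord.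
have h1 : sX y <= sX x.
  have := sX_bar x; rewrite exy bar_iff // => /andP [] //.
have h2 : sX x <= sX y.
  have := sX_bar y; rewrite -exy bar_iff // => /andP [] //.
have sxy : tag x = tag y by apply: val_inj; apply/eqP; rewrite eqn_leq h1 h2.
move: exy; rewrite /barOf; case: x {xS h1 h2 exn sxn} sxy => kx ix /=.
case: y {yS eyn syn} => ky iy /= ek; subst ky => /e_inj ->; done.
Qed.

Lemma barOf_surj b k : k < n -> bar b (p k) -> exists2 x, x \in SA & barOf x = b.
Proof.
move=> kn bk.
case: (arg_minnP (fun j : 'I_n => nat_of_ord j) (i0 := Ordinal kn) (P := fun j : 'I_n => bar b (p j)) bk) => k0 bk0 k0min.
have [i ei] := e_surj _ _ bk0.
exists (existT (fun k : 'I_n => 'I_(N (p k))) k0 i); last by rewrite /barOf /= ei.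
rewrite inE; apply/forallP => k'; apply/implyP => lt; apply/negP.
rewrite /barOf /= ei => bk'.
by have := k0min k' bk'; rewrite leqNgt lt.
Qed.

Lemma bridge k (kn : k < n) (Q : pred (rep B)) : (forall b, Q b -> bar b (p k)) ->
  #|[set i : 'I_(N (p k)) | Q (e (p k) i)]| = #|[set x | (x \in SA) && Q (barOf x)]|.
Proof.
move=> HQ; apply: (@card_bij _ _ _ _ (fun i x => e (p k) i = barOf x)).
- move=> i Qi; have [x xS ex] := barOf_surj _ _ kn (e_bar (p k) i).
  by exists x; rewrite xS ex Qi.
- move=> x /andP [xS Qx]; have [i ei] := e_surj _ _ (HQ _ Qx).
  by exists i; rewrite ei.
- by move=> i i' x _ _ h1 h2; apply: (e_inj (p k)); rewrite h1 h2.
- move=> i x y /andP [xS _] /andP [yS _] -> e2; exact: barOf_inj.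
Qed.

Definition RR i j := #|[set x | (x \in SA) && ((sX x < i) && (j <= eX x))]|.

Lemma RR_dim i j : i <= j -> j < n ->
  RR i.+1 j = \dim (Defs.pmap W (p i) (p j) @: limg (F (p i))).
Proof.
move=> ij jn; rewrite dim_img; last exact: p_mono.
have Hb := bridge _ jn (fun b => bar b (p i) && bar b (p j)).
cbv beta in Hb; rewrite (_ : #|_| = #|[set l : 'I_(N (p j)) | bar (e (p j) l) (p i) && bar (e (p j) l) (p j)]|).
  rewrite Hb; last by move=> b /andP [].
  rewrite /RR; apply: eq_set_card => x; case xS: (x \in SA) => //=.
  rewrite !bar_iff //; last by apply: leq_ltn_trans jn.
  have [_ /andP [se en]] := eX_bar x; lia.
by apply: eq_set_card => l; rewrite e_bar andbT.
Qed.
End Chain.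
End Decomp.

Module FIP.
Import finmap classical_sets cardinality topology.
Import ArrowAsProduct.
Local Open Scope classical_set_scope.
Fixpoint inseq {A : Type} (x : A) (s : seq A) : Prop :=
  match s with nil => False | y :: s' => y = x \/ inseq x s' end.

Section FIP.
Variables (I : Type) (N : I -> nat) (P1 : I -> nat -> Prop)
  (P2 : I -> I -> nat -> nat -> Prop).
Let J := {classic I}.
Let PT := forall i : J, nat.

Lemma loc_closed (S : set PT) (a b : J) :
  (forall f g : PT, f a = g a -> f b = g b -> S f -> S g) -> closed S.
Proof.
move=> HS.
have -> : S = ~` (~` S) by rewrite setCK.
apply: open_closedC; rewrite openE => f nSf.
rewrite /interior /=.
have Ha : nbhs f ((fun h : PT => h a) @^-1` [set f a]).
  by apply: (@proj_continuous J (fun=> nat) a f); exact: discrete_set1.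
have Hb : nbhs f ((fun h : PT => h b) @^-1` [set f b]).
  by apply: (@proj_continuous J (fun=> nat) b f); exact: discrete_set1.
apply: filterS (filterI Ha Hb) => g [/= ga gb] Sg; apply: nSf.
by apply: (HS g f) => //.
Qed.

Hypothesis Hfin : forall s : seq I, exists c : I -> nat,
  (forall a, inseq a s -> (c a < N a)%N /\ P1 a (c a)) /\
  (forall a a', inseq a s -> inseq a' s -> P2 a a' (c a) (c a')).

Lemma fip_choice : exists c : I -> nat,
  (forall a, (c a < N a)%N /\ P1 a (c a)) /\ (forall a a', P2 a a' (c a) (c a')).
Proof.
pose A : set PT := [set f | forall i, (f i < N i)%N].
have cA : compact A.
  apply: (@tychonoff J (fun=> nat) (fun i => [set k | (k < N i)%N])) => i.
  apply: finite_compact.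
  by apply: (@sub_finite_set _ _ `I_(N i)) => // k; rewrite /= inE.
pose K := (J + (J * J))%type.
pose g (k : K) : set PT := match k with
  | inl a => [set f | P1 a (f a)]
  | inr ab => [set f | P2 ab.1 ab.2 (f ab.1) (f ab.2)] end.
have clg : forall k, closed (g k).
  case=> [a|[a b]].
    by apply: (@loc_closed _ a a) => f h /= -> _.
  by apply: (@loc_closed _ a b) => f h /= -> ->.
have finIf : finI [set: K] (fun k => A `&` g k).
  move=> D' _.
  pose kl (k : K) : seq I := match k with inl a => [:: a] | inr ab => [:: ab.1; ab.2] end.
  pose s := flatten [seq kl k | k <- finmap.enum_fset D'].
  have memS (k : K) (a : I) : k \in finmap.enum_fset D' -> inseq a (kl k) -> inseq a s.
    rewrite /s; elim: (finmap.enum_fset D') => [|k0 l IH] //= .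
    rewrite inE => /orP [/eqP <- | kl0] ain.
      elim: (kl k) ain => [|x r IHr] //= [->|/IHr]; [by left | by right].
    have := IH kl0 ain; elim: (kl k0) => [|x r IHr] //= H; by right; apply: IHr.
  have [c [c1 c2]] := Hfin s.
  have Npos : forall i, (0 < N i)%N.
    move=> i; have [c' [c'1 _]] := Hfin [:: i].
    by have [+ _] := c'1 i (or_introl erefl); case: (N i).
  pose c' : PT := fun i => if `[< inseq (i : I) s >] then c i else 0%N.
  have c'E a : inseq a s -> c' a = c a by move=> H; rewrite /c'; case: asboolP.
  exists c' => k /= kD; split.
    move=> i; rewrite /c'; case: asboolP => [/c1 []|] //.
  case: k kD => [a|[a b]] kD /=.
    have aS : inseq a s by apply: (memS (inl a)) => //=; left.
    by rewrite c'E //; case: (c1 a aS).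
  have aS : inseq a s by apply: (memS (inr (a, b))) => //=; left.
  have bS : inseq b s by apply: (memS (inr (a, b))) => //=; right; left.
  by rewrite !c'E //; apply: c2.
have [i0|noI] := pselect (exists i : I, True); last first.
  exists (fun=> 0%N); split=> a; exfalso; apply: noI; by exists a.
have : \bigcap_(k in [set: K]) (A `&` g k) !=set0.
  have [|p [Ap clfinIfp]] := cA _ (finI_filter finIf).
    case: i0 => i0 _.
    by exists (A `&` g (inl i0)); [apply: finI_from1|].
  exists p => j _; split=> //; apply: clg => // B.
  apply: clfinIfp; exists (A `&` g j); first exact: finI_from1.
  by move=> x [].
case=> f Hf; exists f; split.
  move=> a; have [Af ga] := Hf (inl a) Logic.I; split=> //; exact: Af.
by move=> a b; have [_ gab] := Hf (inr (a, b)) Logic.I.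
Qed.
End FIP.

End FIP.

Section ZPart.
Variables (K : fieldType) (d : Order.disp_t) (T : orderType d).

Lemma limg_compE (A B C : vectType K) (f : 'Hom(A, C)) (g : 'Hom(B, C)) (h : 'Hom(A, B))
  (U : {vspace A}) : (forall x, f x = g (h x)) -> (f @: U = g @: (h @: U))%VS.
Proof.
move=> E; have -> : f = (g \o h)%VF by apply/lfunP => x; rewrite comp_lfunE.
by rewrite limg_comp.
Qed.

Lemma dim_img_le (A B : vectType K) (f : 'Hom(A, B)) (U : {vspace A}) :
  \dim (f @: U) <= \dim U.
Proof. by have := limg_ker_dim f U; lia. Qed.

Lemma dimD1 (A B : vectType K) (f : 'Hom(A, B)) (U U' : {vspace A}) :
  (U' <= U)%VS -> \dim (f @: U) + \dim U' <= \dim U + \dim (f @: U').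
Proof.
move=> sU; have := limg_ker_dim f U; have := limg_ker_dim f U'.
have : \dim (U' :&: lker f) <= \dim (U :&: lker f).
  by apply: dimvS; apply: capvS.
lia.
Qed.

Variables (U V T' W : pmod K T) (F : pmhom U V) (G : pmhom T' W)
    (phi1 : pmhom T' U) (phi2 : pmhom V W).
Hypothesis HG : forall (t : T) (x : T' t), G t x = phi2 t (F t (phi1 t x)).
Variables (n : nat) (p : nat -> T).
Hypothesis p_mono : forall i j, i <= j -> j < n -> (p i <= p j)%O.

Definition ImZ i j := (Defs.pmap V (p i) (p j) @: (F (p i) @: limg (phi1 (p i))))%VS.
Definition ImX i j := (Defs.pmap V (p i) (p j) @: limg (F (p i)))%VS.
Definition ImY i j := (Defs.pmap W (p i) (p j) @: limg (G (p i)))%VS.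
Definition RZ i j := if (0 < i) && (j < n) then \dim (ImZ i.-1 j) else 0.

Lemma Z_X i j : (ImZ i j <= ImX i j)%VS.
Proof. by apply: limgS; apply: limgS; apply: subvf. Qed.

Lemma Z_next i j : i <= j -> j.+1 < n ->
  ImZ i j.+1 = (Defs.pmap V (p j) (p j.+1) @: ImZ i j)%VS.
Proof.
move=> ij jn; apply: limg_compE => x; apply: pmap_comp.
  by apply: p_mono => //; apply: ltnW.
by apply: p_mono => //; apply: ltnW.
Qed.

Lemma X_next i j : i <= j -> j.+1 < n ->
  ImX i j.+1 = (Defs.pmap V (p j) (p j.+1) @: ImX i j)%VS.
Proof.
move=> ij jn; apply: limg_compE => x; apply: pmap_comp.
  by apply: p_mono => //; apply: ltnW.
by apply: p_mono => //; apply: ltnW.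
Qed.

Lemma Z_prev i j : 0 < i -> i <= j -> j < n -> (ImZ i.-1 j <= ImZ i j)%VS.
Proof.
move=> i0 ij jn; rewrite /ImZ.
have le1 : (p i.-1 <= p i)%O by apply: p_mono; [apply: leq_pred | apply: leq_ltn_trans jn].
have le2 : (p i <= p j)%O by apply: p_mono.
rewrite (@limg_compE _ _ _ (Defs.pmap V (p i.-1) (p j)) (Defs.pmap V (p i) (p j)) (Defs.pmap V (p i.-1) (p i))); last first.
  by move=> x; apply: pmap_comp.
apply: limgS.
rewrite -!limg_comp.
have -> : ((Defs.pmap V (p i.-1) (p i) \o F (p i.-1)) \o phi1 (p i.-1))%VF =
   ((F (p i) \o phi1 (p i)) \o Defs.pmap T' (p i.-1) (p i))%VF.
  by apply/lfunP => x; rewrite !comp_lfunE -hnat // -hnat.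
rewrite limg_comp; apply: limgS; apply: subvf.
Qed.

Lemma Y_Z i j : i <= j -> j < n -> ImY i j = (phi2 (p j) @: ImZ i j)%VS.
Proof.
move=> ij jn; rewrite /ImY /ImZ.
rewrite -!limg_comp; congr (_ @: _)%VS; apply/lfunP => x; rewrite !comp_lfunE HG.
by rewrite hnat //; apply: p_mono.
Qed.


Lemma RZ0 j : RZ 0 j = 0. Proof. by []. Qed.
Lemma RZn i : RZ i n = 0. Proof. by rewrite /RZ ltnn andbF. Qed.

Lemma P1Z i j : i <= j < n -> RZ i j + RZ i.+1 j.+1 <= RZ i.+1 j + RZ i j.+1.
Proof.
case/andP => ij jn; rewrite /RZ jn.
case: (ltnP j.+1 n) => [j1n|j1n].
  rewrite ?andbT; case: i ij => [|i] ij /=.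
    by rewrite add0n addn0 Z_next //; apply: dim_img_le.
  rewrite !Z_next //; last by apply: ltnW.
  by rewrite addnC; apply: dimD1; apply: (Z_prev i.+1 j) => //; apply: ltnW.
rewrite ?andbT ?andbF !addn0; case: i ij => [|i] ij //=.
by apply: dimvS; apply: (Z_prev i.+1 j).
Qed.

Lemma P2Z i j : i <= j -> j.+1 < n ->
  \dim (ImZ i j) + \dim (ImX i j.+1) <= \dim (ImX i j) + \dim (ImZ i j.+1).
Proof.
move=> ij jn; rewrite Z_next // X_next // addnC; apply: dimD1; exact: Z_X.
Qed.

Lemma P2Z' i j : \dim (ImZ i j) <= \dim (ImX i j).
Proof. by apply: dimvS; apply: Z_X. Qed.

Lemma P3Z i j : 0 < i -> i <= j -> j < n ->
  \dim (ImY i j) + \dim (ImZ i.-1 j) <= \dim (ImZ i j) + \dim (ImY i.-1 j).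
Proof.
move=> i0 ij jn; rewrite !Y_Z //; last by apply: leq_trans ij; apply: leq_pred.
by apply: dimD1; apply: Z_prev.
Qed.

Lemma P3Z0 j : j < n -> \dim (ImY 0 j) <= \dim (ImZ 0 j).
Proof. by move=> jn; rewrite Y_Z //; apply: dim_img_le. Qed.

End ZPart.

Section Final.
Variables (K : fieldType) (d : Order.disp_t) (T : orderType d)
    (U V T' W : pmod K T) (F : pmhom U V) (G : pmhom T' W)
    (phi1 : pmhom T' U) (phi2 : pmhom V W).
Hypothesis HG : forall (t : T) (x : T' t), G t x = phi2 t (F t (phi1 t x)).
Variables (BG BF : barcode T).
Variables (vG : rep BG -> forall t, W t) (NG : T -> nat) (eG : forall t, 'I_(NG t) -> rep BG).
Hypothesis eG_inj : forall t, injective (eG t).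
Hypothesis eG_bar : forall t i, bar (eG t i) t.
Hypothesis eG_surj : forall t b, bar b t -> exists i, eG t i = b.
Hypothesis eG_basis : forall t, basis_of (limg (G t)) [seq vG (eG t i) t | i <- enum 'I_(NG t)].
Hypothesis vG_map : forall b (s t : T), (s <= t)%O -> bar b s ->
  Defs.pmap W s t (vG b s) = if bar b t then vG b t else 0%R.
Variables (vF : rep BF -> forall t, V t) (NF : T -> nat) (eF : forall t, 'I_(NF t) -> rep BF).
Hypothesis eF_inj : forall t, injective (eF t).
Hypothesis eF_bar : forall t i, bar (eF t i) t.
Hypothesis eF_surj : forall t b, bar b t -> exists i, eF t i = b.
Hypothesis eF_basis : forall t, basis_of (limg (F t)) [seq vF (eF t i) t | i <- enum 'I_(NF t)].
Hypothesis vF_map : forall b (s t : T), (s <= t)%O -> bar b s ->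
  Defs.pmap V s t (vF b s) = if bar b t then vF b t else 0%R.

Section ChainF.
Variables (n : nat) (p : nat -> T).
Hypothesis p_mono : forall i j, i <= j -> j < n -> (p i <= p j)%O.

Let AG := Asig d T NG n p.
Let SAG := SA d T BG NG eG n p.
Let sG := sX d T NG n p.
Let eGx := eX d T BG NG eG n p.
Let barG := barOf d T BG NG eG n p.
Let AF := Asig d T NF n p.
Let SAF := SA d T BF NF eF n p.
Let sF := sX d T NF n p.
Let eFx := eX d T BF NF eF n p.
Let barF := barOf d T BF NF eF n p.
Let RZ' := RZ K d T U V T' F phi1 n p.

Lemma chain_thm : exists h : AG -> option AF,
  (forall x, x \in SAG -> exists y, [/\ h x = Some y, y \in SAF &
      forall k, k < n -> bar (barG x) (p k) -> bar (barF y) (p k)]) /\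
  (forall x x' y, x \in SAG -> x' \in SAG -> h x = Some y -> h x' = Some y -> x = x').
Proof.
have HA : forall a, a \in SAG -> sG a <= eGx a < n.
  by move=> a _; case: (eX_bar d T BG NG eG eG_bar n p a).
have HB : forall b, b \in SAF -> sF b <= eFx b < n.
  by move=> b _; case: (eX_bar d T BF NF eF eF_bar n p b).
have RRG i j : i <= j -> j < n -> RA SAG sG eGx i.+1 j = \dim (ImY K d T T' W G p i j).
  move=> ij jn; exact: (RR_dim K d T T' W G BG vG NG eG eG_inj eG_bar eG_surj eG_basis vG_map n p p_mono i j ij jn).
have RRF i j : i <= j -> j < n -> RB SAF sF eFx i.+1 j = \dim (ImX K d T U V F p i j).
  move=> ij jn; exact: (RR_dim K d T U V F BF vF NF eF eF_inj eF_bar eF_surj eF_basis vF_map n p p_mono i j ij jn).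
have RA0 j : RA SAG sG eGx 0 j = 0.
  by apply: set0_card => x; rewrite ltn0 andbF.
have RBn i : RB SAF sF eFx i n = 0.
  apply: set0_card => x; apply/negP => /andP [_ /andP [_ H]].
  case: (eX_bar d T BF NF eF eF_bar n p x) => _ /andP [_ H2].
  by move: H H2; rewrite /eFx; lia.
have P2' : forall i j, i <= j < n ->
    RZ' i.+1 j + RB SAF sF eFx i.+1 j.+1 <= RB SAF sF eFx i.+1 j + RZ' i.+1 j.+1.
  move=> i j /andP [ij jn]; rewrite /RZ' /RZ /= jn.
  case: (ltnP j.+1 n) => [j1n|j1n].
    rewrite (RRF i j) // (RRF i j.+1) ?(leqW ij) //.
    exact: (P2Z K d T U V T' F phi1 n p p_mono i j ij j1n).
  have e : j.+1 = n by apply/eqP; rewrite eqn_leq j1n jn.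
  rewrite e RBn (RRF i j) // !addn0; exact: P2Z'.
have P3' : forall i j, i <= j < n ->
    RA SAG sG eGx i.+1 j + RZ' i j <= RZ' i.+1 j + RA SAG sG eGx i j.
  move=> i j /andP [ij jn]; rewrite /RZ' /RZ /= jn RRG //.
  case: i ij => [|i] ij.
    rewrite RA0 /= ?addn0; exact: (P3Z0 K d T U V T' W F G phi1 phi2 HG n p p_mono j jn).
  rewrite RRG //; last by apply: ltnW.
  exact: (P3Z K d T U V T' W F G phi1 phi2 HG n p p_mono i.+1 j isT ij jn).
have [h [h1 h2]] := @core n AG AF SAG SAF sG eGx sF eFx HA HB RZ'
  (RZ0 K d T U V T' F phi1 n p) (RZn K d T U V T' F phi1 n p)
  (P1Z K d T U V T' F phi1 n p p_mono) P2' P3'.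
exists h; split=> // x xS; have [y [hy yS sy ey]] := h1 x xS.
exists y; split=> // k kn.
rewrite (bar_iff d T BG NG eG eG_bar n p p_mono x k xS kn).
rewrite (bar_iff d T BF NF eF eF_bar n p p_mono y k yS kn).
case/andP => sk ke; apply/andP; split; [exact: leq_trans sy sk | exact: leq_trans ke ey].
Qed.

End ChainF.

Variable tG : rep BG -> T.
Hypothesis tG_bar : forall a, bar a (tG a).

Definition wit (a : rep BG) (b : rep BF) : T :=
  match pselect (exists t, bar a t && ~~ bar b t) with
  | left H => proj1_sig (cid H)
  | right _ => tG a
  end.

Lemma witP a b : (exists t, bar a t && ~~ bar b t) -> bar a (wit a b) && ~~ bar b (wit a b).
Proof.
move=> H; rewrite /wit; case: pselect => [H'|//].
by case: (cid H').
Qed.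

Lemma inseq_flatten (A : Type) (B : eqType) (f : A -> seq B) (s : seq A) a x :
  FIP.inseq a s -> x \in f a -> x \in flatten [seq f a | a <- s].
Proof.
elim: s => [|a' s IH] //= [<-|ins] xin; rewrite mem_cat ?xin //.
by rewrite IH ?orbT.
Qed.

Lemma finite_stage (s : seq (rep BG)) : exists c : rep BG -> nat,
  (forall a, FIP.inseq a s -> (c a < NF (tG a)) /\
     exists h : c a < NF (tG a), forall t, bar a t -> bar (eF (tG a) (Ordinal h)) t) /\
  (forall a a', FIP.inseq a s -> FIP.inseq a' s ->
     forall (h : c a < NF (tG a)) (h' : c a' < NF (tG a')),
     eF (tG a) (Ordinal h) = eF (tG a') (Ordinal h') -> a = a').
Proof.
case: s => [|a0 s0]; first by exists (fun=> 0); split.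
set s := a0 :: s0.
pose pts := flatten [seq tG a :: [seq wit a (eF (tG a) l) | l <- enum 'I_(NF (tG a))] | a <- s].
pose P := sort <=%O pts.
pose n := size P.
pose p k := nth (tG a0) P k.
have p_mono : forall i j, i <= j -> j < n -> (p i <= p j)%O.
  move=> i j ij jn; apply: (sorted_leq_nth le_trans le_refl) => //.
  - by apply: sort_sorted; exact: le_total.
  - by rewrite inE; apply: leq_ltn_trans jn.
have memP : forall t, t \in pts -> exists2 k, k < n & p k = t.
  move=> t tin; have tP : t \in P by rewrite mem_sort.
  by exists (index t P); [rewrite index_mem | rewrite /p nth_index].
have [h [h1 h2]] := chain_thm n p p_mono.
have Hspec : forall a, exists l : nat, FIP.inseq a s ->
    exists (hl : l < NF (tG a)) x y, [/\ x \in SA d T BG NG eG n p,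
      barOf d T BG NG eG n p x = a, h x = Some y, y \in SA d T BF NF eF n p &
      eF (tG a) (Ordinal hl) = barOf d T BF NF eF n p y /\
      forall k, k < n -> bar a (p k) -> bar (barOf d T BF NF eF n p y) (p k)].
  move=> a; case: (pselect (FIP.inseq a s)) => [ains|]; last by exists 0.
  have [ka kn pk] : exists2 k, k < n & p k = tG a.
    apply: memP; apply: (inseq_flatten _ _ _ _ _ _ ains); exact: mem_head.
  have [x xS ex] := barOf_surj d T BG NG eG eG_surj n p a ka kn (ltac:(by rewrite pk)).
  have [y [hy yS cont]] := h1 x xS.
  have bt : bar (barOf d T BF NF eF n p y) (tG a) by rewrite -pk; apply: cont => //; rewrite ex pk.
  have [l el] := eF_surj _ _ bt.
  exists l => _; exists (ltn_ord l), x, y; split=> //.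
  split; first by rewrite -el; congr (eF _ _); apply: val_inj.
  by rewrite -ex.
pose c a := proj1_sig (cid (Hspec a)).
have cP a : FIP.inseq a s -> _ := proj2_sig (cid (Hspec a)).
exists c; split.
  move=> a ains; have [hl [x [y [xS ex hx yS [ey cont]]]]] := cP a ains.
  split=> //; exists hl => t bat.
  apply/negPn/negP => nb.
  have := witP a (eF (tG a) (Ordinal hl)) (ex_intro _ t (introT andP (conj bat nb))); case/andP => wa wb.
  have [k kn pk] : exists2 k, k < n & p k = wit a (eF (tG a) (Ordinal hl)).
    apply: memP; apply: (inseq_flatten _ _ _ _ _ _ ains); rewrite inE; apply/orP; right.
    by apply/mapP; exists (Ordinal hl); rewrite ?mem_enum.
  move: wb; rewrite -pk ey cont ?pk //.
move=> a a' ains a'ins hh hh' E.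
have [hl [x [y [xS ex hx yS [ey _]]]]] := cP a ains.
have [hl' [x' [y' [x'S ex' hx' y'S [ey' _]]]]] := cP a' a'ins.
have E1 : Ordinal hl = Ordinal hh by apply: val_inj.
have E2 : Ordinal hl' = Ordinal hh' by apply: val_inj.
rewrite -E1 -E2 ey ey' in E.
have yy : y = y' := barOf_inj d T BF NF eF eF_inj eF_bar n p p_mono y y' yS y'S E.
subst y'; have xx := h2 x x' y xS x'S hx hx'; subst x'.
by rewrite -ex -ex'.
Qed.

End Final.

Theorem theorem3p3 (K : fieldType) (d : Order.disp_t) (T : orderType d)
    (U V T' W : pmod K T) (F : pmhom U V) (G : pmhom T' W)
    (phi1 : pmhom T' U) (phi2 : pmhom V W) :
  (forall (t : T) (x : T' t), G t x = phi2 t (F t (phi1 t x))) ->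
  forall BG BF : barcode T,
    barcode_of_image G BG -> barcode_of_image F BF -> subbarcode BG BF.
Proof.
move=> HG BG BF [vG [HGe HGv]] [vF [HFe HFv]].
pose NG t := proj1_sig (cid (HGe t)).
pose eG t : 'I_(NG t) -> rep BG := proj1_sig (cid (proj2_sig (cid (HGe t)))).
have HeG t := proj2_sig (cid (proj2_sig (cid (HGe t)))).
pose NF t := proj1_sig (cid (HFe t)).
pose eF t : 'I_(NF t) -> rep BF := proj1_sig (cid (proj2_sig (cid (HFe t)))).
have HeF t := proj2_sig (cid (proj2_sig (cid (HFe t)))).
pose tG (a : rep BG) : T := proj1_sig (cid (proj1 (bar_interval a))).
have tG_bar (a : rep BG) : bar a (tG a) := proj2_sig (cid (proj1 (bar_interval a))).
have eG_inj t : injective (eG t) by case: (HeG t).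
have eG_bar t i : bar (eG t i) t by case: (HeG t) => _ H _ _; exact: H.
have eG_surj t b : bar b t -> exists i, eG t i = b by case: (HeG t) => _ _ H _; exact: H.
have eG_basis t : basis_of (limg (G t)) [seq vG (eG t i) t | i <- enum 'I_(NG t)] by case: (HeG t).
have eF_inj t : injective (eF t) by case: (HeF t).
have eF_bar t i : bar (eF t i) t by case: (HeF t) => _ H _ _; exact: H.
have eF_surj t b : bar b t -> exists i, eF t i = b by case: (HeF t) => _ _ H _; exact: H.
have eF_basis t : basis_of (limg (F t)) [seq vF (eF t i) t | i <- enum 'I_(NF t)] by case: (HeF t).
have Hfin := finite_stage K d T U V T' W F G phi1 phi2 HG BG BF vG NG eG eG_inj eG_bar eG_surj
  eG_basis HGv vF NF eF eF_inj eF_bar eF_surj eF_basis HFv tG tG_bar.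
have [c [c1 c2]] := FIP.fip_choice (rep BG) (fun a => NF (tG a))
  (fun a k => exists h : k < NF (tG a), forall t, bar a t -> bar (eF (tG a) (Ordinal h)) t)
  (fun a a' k k' => forall (h : k < NF (tG a)) (h' : k' < NF (tG a')),
     eF (tG a) (Ordinal h) = eF (tG a') (Ordinal h') -> a = a') Hfin.
exists (fun a b => exists h : c a < NF (tG a), b = eF (tG a) (Ordinal h)); split.
- split.
    move=> a b b' [h ->] [h' ->]; congr (eF _ _); exact: val_inj.
  by move=> a a' b [h ->] [h' E]; apply: (c2 a a' h h').
- by move=> a; have [h _] := c1 a; exists (eF (tG a) (Ordinal h)), h.
- move=> a b [h ->] t bat; have [_ [h' H]] := c1 a.
  have -> : Ordinal h = Ordinal h' by apply: val_inj.
  exact: H.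
Qed.
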